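(* Let $S$ be a semibounded linear relation in $\mathfrak H$ with lower bound $\gamma\in\mathbb R$, let $c\le\gamma$, and let $Q_c$ be a representing map for $\mathfrak t(S)-c$. Then: (1) $\varphi\in\mathrm{dom}\,\bar{\mathfrak t}(S)$ if and only if there is a sequence $\{\varphi_n,\varphi_n'\}\in S$ with $\varphi_n\to\varphi$ and $(\varphi_n'-\varphi_m',\varphi_n-\varphi_m)\to0$ as $n,m\to\infty$. (2) $\varphi\in\ker(\bar{\mathfrak t}(S)-c)$, i.e. $\varphi\in\mathrm{dom}\,\bar{\mathfrak t}(S)$ with $\bar{\mathfrak t}(S)[\varphi,\varphi]=c\|\varphi\|^2$, if and only if there is a sequence $\{\varphi_n,\varphi_n'\}\in S$ with $\varphi_n\to\varphi$ and $(\varphi_n'-c\varphi_n,\varphi_n)\to0$. (3) $\varphi\in\mathrm{ran}\,Q_c^*$ if and only if there exists $C_\varphi<\infty$ such that $|(\psi,\varphi)|^2\le C_\varphi(\psi',\psi)$ for all $\{\psi,\psi'\}\in S-c$.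
   Context: Linear relations are linear subspaces $T\subset\mathfrak H\times\mathfrak K$; $\mathrm{dom}$, $\mathrm{ran}$ as usual, $T^*=\{\{h,k\}\in\mathfrak K\times\mathfrak H:(k,f)=(h,g)\ \forall\{f,g\}\in T\}$, and $S-c=\{\{f,g-cf\}:\{f,g\}\in S\}$. A relation $S$ in $\mathfrak H$ is semibounded with lower bound $\gamma$ if $\gamma$ is the supremum of all $c$ with $(\varphi',\varphi)\ge c\|\varphi\|^2$ for all $\{\varphi,\varphi'\}\in S$. The form $\mathfrak t(S)[\varphi,\psi]=(\varphi',\psi)$, $\{\varphi,\varphi'\},\{\psi,\psi'\}\in S$, domain $\mathrm{dom}\,S$; it is closable and $\bar{\mathfrak t}(S)$ denotes its closure. A representing map for $\mathfrak t(S)-c$ is a linear operator $Q_c$ from $\mathfrak H$ to a Hilbert space $\mathfrak K_c$ with $\mathrm{dom}\,Q_c=\mathrm{dom}\,S$ and $\mathfrak t(S)[\varphi,\psi]=c(\varphi,\psi)+(Q_c\varphi,Q_c\psi)$; $Q_c^*\subset\mathfrak K_c\times\mathfrak H$ is its adjoint relation. *)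

(* Defs.v *)
From HB Require Import structures.
From mathcomp Require Import all_boot all_order all_algebra.
From mathcomp Require Import complex.
From mathcomp Require Import boolp classical_sets reals topology normedtype sequences.
Set Implicit Arguments. Unset Strict Implicit. Unset Printing Implicit Defensive.
Import Order.TTheory GRing.Theory Num.Theory numFieldNormedType.Exports.
Local Open Scope classical_set_scope.
Local Open Scope ring_scope.
Local Open Scope complex_scope.

Section Hilbert.
Variable R : realType.
Local Notation C := R[i].

(* modulus of a complex number, as a real: Re |z| (|z| = (normc z)%:C) *)
Definition cmod (z : C) : R := complex.Re `|z|.

Section Space.
Variable V : lmodType C.
Variable ip : V -> V -> C.   (* (x, y): linear in x, antilinear in y *)

Definition hnorm (x : V) : R := Num.sqrt (complex.Re (ip x x)).

Definition hconverges (u : nat -> V) (x : V) : Prop :=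
  (fun n => hnorm (u n - x)) @ \oo --> (0 : R).

Definition hcauchy (u : nat -> V) : Prop :=
  forall e : R, 0 < e -> exists N : nat,
    forall n m : nat, (N <= n)%N -> (N <= m)%N -> hnorm (u n - u m) < e.

Definition is_hilbert : Prop :=
  [/\ (forall (a : C) (x y z : V), ip (a *: x + y) z = a * ip x z + ip y z),
      (forall x y : V, ip x y = (ip y x)^*),
      (forall x : V, 0 <= ip x x),
      (forall x : V, ip x x = 0 -> x = 0) &
      (forall u : nat -> V, hcauchy u -> exists x, hconverges u x)].

(* a relation S in V is given by its graph, S f f' meaning {f, f'} \in S *)
Definition linrel (S : V -> V -> Prop) : Prop :=
  S 0 0 /\ forall (a : C) f f' g g', S f f' -> S g g' ->
                                      S (a *: f + g) (a *: f' + g').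

Definition rdom (S : V -> V -> Prop) (f : V) : Prop := exists f', S f f'.

Definition lower_bound_prop (S : V -> V -> Prop) (c : R) : Prop :=
  forall f f', S f f' -> (c * hnorm f ^+ 2)%:C <= ip f' f.

Definition semibounded_lb (S : V -> V -> Prop) (gamma : R) : Prop :=
  lower_bound_prop S gamma /\
  forall c : R, lower_bound_prop S c -> c <= gamma.

(* a form is a pair (D, t) of a domain D and values t x y (x, y in D) *)
Definition subspace (D : V -> Prop) : Prop :=
  D 0 /\ forall (a : C) x y, D x -> D y -> D (a *: x + y).

Definition sesq_form (D : V -> Prop) (t : V -> V -> C) : Prop :=
  [/\ subspace D,
      (forall (a : C) x y z, D x -> D y -> D z ->
          t (a *: x + y) z = a * t x z + t y z) &
      (forall (a : C) x y z, D x -> D y -> D z ->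
          t z (a *: x + y) = a^* * t z x + t z y)].

Definition semibounded_form (D : V -> Prop) (t : V -> V -> C) : Prop :=
  exists m : R, forall x, D x -> (m * hnorm x ^+ 2)%:C <= t x x.

Definition form_cauchy (t : V -> V -> C) (u : nat -> V) : Prop :=
  forall e : R, 0 < e -> exists N : nat,
    forall n m : nat, (N <= n)%N -> (N <= m)%N ->
      cmod (t (u n - u m) (u n - u m)) < e.

Definition closed_form (D : V -> Prop) (t : V -> V -> C) : Prop :=
  forall (u : nat -> V) (x : V), (forall n, D (u n)) -> hconverges u x ->
    form_cauchy t u ->
    D x /\ (fun n => cmod (t (u n - x) (u n - x))) @ \oo --> (0 : R).

Definition form_ext (D1 : V -> Prop) (t1 : V -> V -> C)
    (D2 : V -> Prop) (t2 : V -> V -> C) : Prop :=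
  (forall x, D1 x -> D2 x) /\
  (forall x y, D1 x -> D1 y -> t1 x y = t2 x y).

(* (D, t) extends the form t(S)[f, g] = (f', g), dom t(S) = dom S *)
Definition extends_tS (S : V -> V -> Prop) (D : V -> Prop) (t : V -> V -> C)
  : Prop :=
  (forall x, rdom S x -> D x) /\
  (forall f f' g, S f f' -> rdom S g -> t f g = ip f' g).

Definition is_closure_tS (S : V -> V -> Prop) (Db : V -> Prop)
    (tb : V -> V -> C) : Prop :=
  [/\ sesq_form Db tb, semibounded_form Db tb, closed_form Db tb,
      extends_tS S Db tb &
      forall (D' : V -> Prop) (t' : V -> V -> C),
        sesq_form D' t' -> semibounded_form D' t' -> closed_form D' t' ->
        extends_tS S D' t' -> form_ext Db tb D' t'].
End Space.

Definition representing_map (V W : lmodType C) (ip : V -> V -> C)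
    (ipW : W -> W -> C) (S : V -> V -> Prop) (c : R) (Q : V -> W) : Prop :=
  (forall (a : C) x y, rdom S x -> rdom S y -> Q (a *: x + y) = a *: Q x + Q y)
  /\ (forall f f' g, S f f' -> rdom S g ->
        ip f' g = c%:C * ip f g + ipW (Q f) (Q g)).

(* k \in ran Q^*, Q^* = {{h, k} in W x V : (k, f) = (h, Q f) for all f in dom Q} *)
Definition in_ran_adj (V W : lmodType C) (ip : V -> V -> C)
    (ipW : W -> W -> C) (D : V -> Prop) (Q : V -> W) (k : V) : Prop :=
  exists h : W, forall f, D f -> ip k f = ipW h (Q f).

End Hilbert.

(* Main.v *)
Require Import Defs.
From HB Require Import structures.
From mathcomp Require Import all_boot all_order all_algebra.
From mathcomp Require Import complex.
From mathcomp Require Import boolp classical_sets reals topology normedtype sequences.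
From mathcomp Require Import ring lra.
Import Order.TTheory GRing.Theory Num.Theory numFieldNormedType.Exports.
Local Open Scope classical_set_scope.
Local Open Scope ring_scope.
Local Open Scope complex_scope.
Set Implicit Arguments.
Unset Strict Implicit.
Lemma cvg0P (R: realType) (r : nat -> R): r @ \oo --> (0:R) <->
  (forall e, 0 < e -> exists M, forall n, (M <= n)%N -> `|r n| < e).
Proof.
rewrite cvgrPdist_lt; split=> H e e0.
  have [M _ HM] := H e e0; exists M => n Mn; rewrite -normrN -(add0r (- _)); exact: HM.
have [M HM] := H e e0; exists M => // n Mn /=; rewrite add0r normrN; exact: HM.
Qed.
Section IP.
Variable R : realType.
Local Notation C := R[i].
Variable V : lmodType C.
Variable ip : V -> V -> C.
Hypothesis H : is_hilbert ip.

Definition m2 (z : C) : R := complex.Re z ^+ 2 + complex.Im z ^+ 2.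
Definition NN (x : V) : R := complex.Re (ip x x).

Lemma cjD (a b : C) : (conjc (a + b)) = conjc a + conjc b.
Proof. by case: a => ? ?; case: b => ? ? /=; apply/eqP; rewrite eq_complex /= opprD !eqxx. Qed.
Lemma cjM (a b : C) : (conjc (a * b)) = conjc a * conjc b.
Proof. by case: a => ? ?; case: b => ? ? /=; apply/eqP; rewrite eq_complex /=; apply/andP; split; apply/eqP; ring. Qed.
Lemma cjN (a : C) : (conjc (- a)) = - conjc a.
Proof. by case: a => ? ?. Qed.
Lemma ipDl x y z : ip (x + y) z = ip x z + ip y z.
Proof. by case: H => H1 _ _ _ _; rewrite -[x in LHS]scale1r H1 mul1r. Qed.
Lemma ip0l z : ip 0 z = 0.
Proof.
have := ipDl 0 0 z; rewrite addr0 => /(congr1 (fun t => t - ip 0 z)).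
by rewrite subrr addrK.
Qed.
Lemma ipZl a x z : ip (a *: x) z = a * ip x z.
Proof. by case: H => H1 _ _ _ _; rewrite -[_ *: x]addr0 H1 ip0l addr0. Qed.
Lemma ipNl x z : ip (- x) z = - ip x z.
Proof. by rewrite -scaleN1r ipZl mulN1r. Qed.
Lemma ipBl x y z : ip (x - y) z = ip x z - ip y z.
Proof. by rewrite ipDl ipNl. Qed.
Lemma ipC x y : ip x y = (conjc (ip y x)).
Proof. by case: H. Qed.
Lemma ipDr x y z : ip z (x + y) = ip z x + ip z y.
Proof. by rewrite ipC ipDl cjD -!ipC. Qed.
Lemma ipZr a x z : ip z (a *: x) = conjc a * ip z x.
Proof. by rewrite ipC ipZl cjM -ipC. Qed.
Lemma ip0r z : ip z 0 = 0.
Proof. by rewrite ipC ip0l conjc0. Qed.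
Lemma ipNr x z : ip z (- x) = - ip z x.
Proof. by rewrite ipC ipNl cjN -ipC. Qed.
Lemma ipBr x y z : ip z (x - y) = ip z x - ip z y.
Proof. by rewrite ipDr ipNr. Qed.

Lemma ipxx x : ip x x = (NN x)%:C.
Proof.
case: H => _ _ H3 _ _; have := ger0_Im (H3 x); rewrite /NN.
by case: (ip x x) => a b /= ->.
Qed.
Lemma NN_ge0 x : 0 <= NN x.
Proof. by case: H => _ _ H3 _ _; have := H3 x; rewrite lecE => /andP[]. Qed.
Lemma NN_eq0 x : NN x = 0 -> x = 0.
Proof. by case: H => _ _ _ H4 _ => h; apply: H4; rewrite ipxx h. Qed.

Lemma ReD (a b : C) : complex.Re (a + b) = complex.Re a + complex.Re b.
Proof. by case: a => ? ?; case: b. Qed.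
Lemma ImD (a b : C) : complex.Im (a + b) = complex.Im a + complex.Im b.
Proof. by case: a => ? ?; case: b. Qed.

Lemma NND x y : NN (x + y) = NN x + NN y + 2 * complex.Re (ip x y).
Proof.
rewrite /NN ipDl !ipDr (ipC y x); move: (ip x x) (ip y y) (ip x y) => a b z.
by case: a => ? ?; case: b => ? ?; case: z => ? ? /=; ring.
Qed.
Lemma NNZ a x : NN (a *: x) = m2 a * NN x.
Proof.
rewrite /NN ipZl ipZr ipxx /m2; case: a => ? ? /=; ring.
Qed.
Lemma NNN x : NN (- x) = NN x.
Proof. by rewrite /NN ipNl ipNr opprK. Qed.
Lemma NNB x y : NN (x - y) = NN x + NN y - 2 * complex.Re (ip x y).
Proof.
rewrite NND NNN ipNr; case: (ip x y) => ? ? /=; ring.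
Qed.
Lemma NN_add_le x y : NN (x + y) <= 2 * NN x + 2 * NN y.
Proof.
have := NN_ge0 (x - y); rewrite NNB NND; lra.
Qed.
Lemma NNsym x y : NN (x - y) = NN (y - x).
Proof. by rewrite -NNN opprB. Qed.

Lemma quad_lemma (A B D : R) : 0 <= A -> 0 <= B -> 0 <= D ->
  (forall t, 0 <= A + t ^+ 2 * B * D - 2 * t * B) -> B <= A * D.
Proof.
move=> A0 B0 D0 h.
have [Dz|Dp] := eqVneq D 0.
  rewrite Dz mulr0; have [Bz|Bp] := eqVneq B 0; first by rewrite Bz.
  have Bq : 0 < B by rewrite lt_def Bp B0.
  have := h ((A + 1) / (2 * B)); rewrite Dz !mulr0 addr0.
  have -> : 2 * ((A + 1) / (2 * B)) * B = A + 1.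
    by field.
  lra.
have Dq : 0 < D by rewrite lt_def Dp D0.
have := h (1 / D).
have -> : A + (1 / D) ^+ 2 * B * D - 2 * (1 / D) * B = (A * D - B) / D.
  by field.
move=> hh; have := mulr_ge0 hh D0; rewrite divfK ?gt_eqF //; lra.
Qed.

Lemma CS x y : m2 (ip x y) <= NN x * NN y.
Proof.
apply: quad_lemma; rewrite ?NN_ge0 //.
  by rewrite /m2 addr_ge0 ?sqr_ge0.
move=> t; have := NN_ge0 (x + (- (t%:C * ip x y)) *: y).
rewrite NND NNZ ipZr /m2; move: (ip x y) => z.
case: z => a b /=.
have -> : (- (t * a - 0 * b)) ^+ 2 + (- (t * b + 0 * a)) ^+ 2 = t^+2 * (a ^+2 + b^+2) by ring.
set u := NN x; set v := NN y.
suff -> : 2 * (- (t * a - 0 * b) * a - - - (t * b + 0 * a) * b) = - (2 * t * (a ^+ 2 + b ^+ 2)) by [].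
ring.
Qed.

Definition ev (P : nat -> Prop) := exists M, forall n, (M <= n)%N -> P n.
Lemma ev_and {P1 P2 : nat -> Prop} : ev P1 -> ev P2 -> ev (fun n => P1 n /\ P2 n).
Proof.
move=> [M1 h1] [M2 h2]; exists (maxn M1 M2) => n hn; split.
  by apply: h1; apply: leq_trans hn; apply: leq_maxl.
by apply: h2; apply: leq_trans hn; apply: leq_maxr.
Qed.
Lemma ev_mono {P1 P2 : nat -> Prop} : (forall n, P1 n -> P2 n) -> ev P1 -> ev P2.
Proof. by move=> h [M hM]; exists M => n /hM /h. Qed.

Lemma q4 {e : R} : 0 < e -> 0 < e / 4. Proof. move=> h; lra. Qed.
Lemma q2 {e : R} : 0 < e -> 0 < e / 2. Proof. move=> h; lra. Qed.

Definition conv (u : nat -> V) x := forall e, 0 < e -> ev (fun n => NN (u n - x) < e).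
Definition cauchy (u : nat -> V) := forall e, 0 < e -> exists M, forall n m,
  (M <= n)%N -> (M <= m)%N -> NN (u n - u m) < e.

Lemma hconvP u x : hconverges ip u x <-> conv u x.
Proof.
rewrite /hconverges cvg0P; split=> h e e0.
  have [M HM] := h (Num.sqrt e) (ltac:(by rewrite sqrtr_gt0)).
  exists M => n /HM; rewrite /hnorm ger0_norm ?sqrtr_ge0 // ltr_sqrt //.
have [M HM] := h (e ^+ 2) (ltac:(by rewrite exprn_gt0)).
exists M => n /HM hn; rewrite /hnorm ger0_norm ?sqrtr_ge0 //.
by rewrite -(ger0_norm (ltW e0)) -sqrtr_sqr ltr_sqrt // ?exprn_gt0.
Qed.

Lemma complete u : cauchy u -> exists x, conv u x.
Proof.
move=> hu; case: H => _ _ _ _ H5.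
have [x hx] : exists x, hconverges ip u x.
  apply: H5 => e e0; have [M HM] := hu (e ^+ 2) (ltac:(by rewrite exprn_gt0)).
  exists M => n m hn hm; have h := HM n m hn hm.
  by rewrite /hnorm -(ger0_norm (ltW e0)) -sqrtr_sqr ltr_sqrt ?exprn_gt0.
by exists x; apply/hconvP.
Qed.

Lemma NN_split a b x : NN (a - b) <= 2 * NN (a - x) + 2 * NN (x - b).
Proof. by have := NN_add_le (a - x) (x - b); rewrite addrA subrK. Qed.

Lemma conv_cauchy u x : conv u x -> cauchy u.
Proof.
move=> hu e e0; have [M hM] := hu (e / 4) (q4 e0).
exists M => n m hn hm; have := NN_split (u n) (u m) x.
rewrite (NNsym x (u m)); have := hM n hn; have := hM m hm; lra.
Qed.

Lemma small0 (r : R) : 0 <= r -> (forall e, 0 < e -> r < e) -> r = 0.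
Proof.
move=> r0 h; apply/eqP; rewrite eq_le r0 andbT; rewrite leNgt; apply/negP => rp.
by have := h r rp; rewrite ltxx.
Qed.

Lemma conv_unique u x y : conv u x -> conv u y -> x = y.
Proof.
move=> hx hy; apply/eqP; rewrite -subr_eq0; apply/eqP/NN_eq0/small0; first exact: NN_ge0.
move=> e e0; have [M hM] := ev_and (hx (e / 4) (q4 e0)) (hy (e / 4) (q4 e0)).
have [h1 h2] := hM M (leqnn _); have := NN_split x y (u M).
rewrite (NNsym x (u M)); lra.
Qed.

Lemma conv_const x : conv (fun _ => x) x.
Proof.
move=> e e0; exists 0%N => n _; rewrite subrr /NN ip0l /=; lra.
Qed.

Lemma conv_add u v x y : conv u x -> conv v y -> conv (fun n => u n + v n) (x + y).
Proof.
move=> hu hv e e0; apply: ev_mono (ev_and (hu (e / 4) (q4 e0)) (hv (e / 4) (q4 e0))).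
move=> n [h1 h2]; have -> : u n + v n - (x + y) = (u n - x) + (v n - y).
  by rewrite opprD addrACA.
have := NN_add_le (u n - x) (v n - y); lra.
Qed.

Lemma m2_ge0 z : 0 <= m2 z.
Proof. by rewrite /m2 addr_ge0 ?sqr_ge0. Qed.

Lemma conv_scale a u x : conv u x -> conv (fun n => a *: u n) (a *: x).
Proof.
move=> hu e e0; have m0 := m2_ge0 a.
have [M hM] := hu (e / (m2 a + 1)) (ltac:(by rewrite divr_gt0 //; lra)).
exists M => n /hM h; rewrite -scalerBr NNZ.
have h' : NN (u n - x) * (m2 a + 1) < e.
  by rewrite -(@ltr_pdivlMr _ (m2 a + 1)) //; lra.
have := NN_ge0 (u n - x); nra.
Qed.

Lemma conv_comb a u v x y : conv u x -> conv v y ->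
  conv (fun n => a *: u n + v n) (a *: x + y).
Proof. by move=> hu hv; exact: (conv_add (conv_scale a hu) hv). Qed.

Lemma conv_sub u v x y : conv u x -> conv v y -> conv (fun n => u n - v n) (x - y).
Proof.
move=> hu hv; have := conv_add hu (conv_scale (-1) hv).
rewrite scaleN1r; have -> : (fun n => u n + (-1) *: v n) = (fun n => u n - v n).
  by apply: funext => n; rewrite scaleN1r.
by [].
Qed.

Definition cconv (z : nat -> C) (l : C) := forall e, 0 < e -> ev (fun n => m2 (z n - l) < e).

Lemma m2_add_le a b : m2 (a + b) <= 2 * m2 a + 2 * m2 b.
Proof. case: a => a1 a2; case: b => b1 b2; rewrite /m2 /=; have := sqr_ge0 (a1 - b1); have := sqr_ge0 (a2 - b2); nra. Qed.
Lemma m2_conj a : m2 (conjc a) = m2 a.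
Proof. case: a => a1 a2; rewrite /m2 /=; ring. Qed.
Lemma m2_eq0 a : m2 a = 0 -> a = 0.
Proof.
case: a => a1 a2; rewrite /m2 /= => h.
have h1 : a1 = 0 by nra. have h2 : a2 = 0 by nra.
by rewrite h1 h2.
Qed.
Lemma m2_mul a b : m2 (a * b) = m2 a * m2 b.
Proof. case: a => a1 a2; case: b => b1 b2; rewrite /m2 /=; ring. Qed.
Lemma m2N a : m2 (- a) = m2 a.
Proof. case: a => a1 a2; rewrite /m2 /=; ring. Qed.
Lemma m2_split a b l : m2 (a - b) <= 2 * m2 (a - l) + 2 * m2 (l - b).
Proof. by have := m2_add_le (a - l) (l - b); rewrite addrA subrK. Qed.

Lemma cconv_unique z l1 l2 : cconv z l1 -> cconv z l2 -> l1 = l2.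
Proof.
move=> h1 h2; apply/eqP; rewrite -subr_eq0; apply/eqP/m2_eq0/small0; first exact: m2_ge0.
move=> e e0; have [M hM] := ev_and (h1 (e / 4) (q4 e0)) (h2 (e / 4) (q4 e0)).
have [k1 k2] := hM M (leqnn _); have := m2_split l1 l2 (z M).
rewrite -m2N opprB in k1; lra.
Qed.

Lemma cconv_ext z1 z2 l : (forall n, z1 n = z2 n) -> cconv z1 l -> cconv z2 l.
Proof. by move=> h; have -> : z2 = z1 by apply: funext => n; rewrite h. Qed.

Lemma cconv_ipl u x y : conv u x -> cconv (fun n => ip (u n) y) (ip x y).
Proof.
move=> hu e e0; have n0 := NN_ge0 y.
have [M hM] := hu (e / (NN y + 1)) (ltac:(by rewrite divr_gt0 //; lra)).
exists M => n /hM h; rewrite -ipBl; apply: le_lt_trans (CS _ _) _.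
have h' : NN (u n - x) * (NN y + 1) < e.
  by rewrite -(@ltr_pdivlMr _ (NN y + 1)) //; lra.
have := NN_ge0 (u n - x); nra.
Qed.

Lemma cconv_ipr u x y : conv u x -> cconv (fun n => ip y (u n)) (ip y x).
Proof.
move=> hu e /(cconv_ipl y hu); apply: ev_mono => n.
by move=> h; rewrite -ipBr ipC m2_conj ipBl.
Qed.

Lemma cconv_const l : cconv (fun _ => l) l.
Proof. by move=> e e0; exists 0%N => n _; rewrite subrr /m2 /= expr0n /=; lra. Qed.
End IP.

Lemma cmodR (R : realType) (r : R) : cmod (r%:C) = `|r|.
Proof. by rewrite /cmod normc_def /= expr0n /= addr0 sqrtr_sqr. Qed.

Definition ik (R : realType) (k : nat) : R := (k.+1%:R)^-1.
Lemma ik_gt0 (R : realType) k : 0 < ik R k.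
Proof. by rewrite /ik invr_gt0 ltr0Sn. Qed.
Lemma inv_small0 (R : realType) (e : R) : 0 < e -> ev (fun k : nat => (k.+1%:R : R)^-1 < e).
Proof.
move=> e0; exists (Num.bound (e^-1)) => k hk.
have h1 : e^-1 < (Num.bound e^-1)%:R by apply: archi_boundP; rewrite invr_ge0 ltW.
have h2 : (Num.bound e^-1)%:R <= (k.+1)%:R :> R by rewrite ler_nat; apply: leq_trans hk _.
rewrite -(invrK e) ltf_pV2 ?posrE ?invr_gt0 //.
exact: lt_le_trans h1 h2.
Qed.

Lemma inv_small (R : realType) (e : R) : 0 < e -> ev (fun k : nat => ik R k < e).
Proof. exact: inv_small0. Qed.

Section Main.
Variables (R : realType) (V W : lmodType R[i]) (ip : V -> V -> R[i]) (ipW : W -> W -> R[i]).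
Variables (S : V -> V -> Prop) (c : R) (Q : V -> W).
Hypotheses (HV : is_hilbert ip) (HW : is_hilbert ipW) (LS : linrel S)
  (RM : representing_map ip ipW S c Q).
Local Notation C := R[i].
Local Notation NV := (NN ip).
Local Notation NW := (NN ipW).
Local Notation convV := (conv ip).
Local Notation convW := (conv ipW).

Lemma S_comb a f f' g g' : S f f' -> S g g' -> S (a *: f + g) (a *: f' + g').
Proof. by case: LS => _; apply. Qed.
Lemma S_sub f f' g g' : S f f' -> S g g' -> S (f - g) (f' - g').
Proof.
move=> h1 h2; have := S_comb (-1) h2 h1; rewrite !scaleN1r.
by rewrite (addrC (- g)) (addrC (- g')).
Qed.
Lemma rdom0 : rdom S 0.
Proof. by case: LS => h _; exists 0. Qed.
Lemma rdom_comb a x y : rdom S x -> rdom S y -> rdom S (a *: x + y).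
Proof. by move=> [x' hx] [y' hy]; exists (a *: x' + y'); apply: S_comb. Qed.
Lemma rdom_sub x y : rdom S x -> rdom S y -> rdom S (x - y).
Proof. by move=> [x' hx] [y' hy]; exists (x' - y'); apply: S_sub. Qed.
Lemma Q_comb a x y : rdom S x -> rdom S y -> Q (a *: x + y) = a *: Q x + Q y.
Proof. by case: RM => h _; apply: h. Qed.
Lemma Q_sub x y : rdom S x -> rdom S y -> Q (x - y) = Q x - Q y.
Proof.
move=> hx hy; have := Q_comb (-1) hy hx; rewrite !scaleN1r.
by rewrite (addrC (- y)) (addrC (- Q y)).
Qed.
Lemma rep f f' g : S f f' -> rdom S g -> ip f' g = c%:C * ip f g + ipW (Q f) (Q g).
Proof. by case: RM => _; apply. Qed.
Lemma rep_diag f f' : S f f' -> ip f' f = (c * NV f + NW (Q f))%:C.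
Proof.
move=> h; rewrite (rep h); last by exists f'.
by rewrite (ipxx HV) (ipxx HW) /= -!rmorphM -rmorphD.
Qed.

Definition GQ x w := exists u : nat -> V,
  [/\ forall n, rdom S (u n), convV u x & convW (fun n => Q (u n)) w].

Lemma cconv_comb0 (z1 z2 : nat -> C) (k : C) : cconv z1 0 -> cconv z2 0 ->
  cconv (fun n => conjc (z1 n - k * z2 n)) 0.
Proof.
move=> h1 h2 e e0; have m0 := m2_ge0 k.
have e1 : 0 < e / 4 / (m2 k + 1) by rewrite divr_gt0 //; lra.
apply: ev_mono (ev_and (h1 _ (q4 e0)) (h2 _ e1)) => n [k1 k2].
rewrite !subr0 in k1 k2 *; rewrite m2_conj.
have := m2_add_le (z1 n) (- (k * z2 n)); rewrite m2N m2_mul.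
have h' : m2 (z2 n) * (m2 k + 1) < e / 4.
  by rewrite -(@ltr_pdivlMr _ (m2 k + 1)) //; lra.
have := m2_ge0 (z2 n); nra.
Qed.

Lemma GQ_unique x w1 w2 : GQ x w1 -> GQ x w2 -> w1 = w2.
Proof.
move=> [u [du cu qu]] [v [dv cv qv]].
pose d n := u n - v n.
have dd n : rdom S (d n) by apply: rdom_sub.
have cd : convV d 0 by have := conv_sub HV cu cv; rewrite subrr.
have qd : convW (fun n => Q (d n)) (w1 - w2).
  have -> : (fun n => Q (d n)) = (fun n => Q (u n) - Q (v n)).
    by apply: funext => n; rewrite /d Q_sub.
  exact (conv_sub HW qu qv).
have orth g : rdom S g -> ipW (w1 - w2) (Q g) = 0.
  move=> [g' Sg].
  apply: (cconv_unique (cconv_ipl HW (Q g) qd)).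
  apply: (@cconv_ext _ (fun n => conjc (ip g' (d n) - c%:C * ip g (d n)))).
    by move=> n; rewrite (rep Sg (dd n)) addrAC subrr add0r [RHS](ipC HW).
  refine (@cconv_comb0 _ _ c%:C _ _).
    by have := cconv_ipr HV g' cd; rewrite (ip0r HV).
  by have := cconv_ipr HV g cd; rewrite (ip0r HV).
have z : ipW (w1 - w2) (w1 - w2) = 0.
  apply: (cconv_unique (cconv_ipr HW (w1 - w2) qd)).
  apply: (@cconv_ext _ (fun _ => 0)); last exact: cconv_const.
  by move=> n; rewrite orth.
case: HW => _ _ _ H4 _; have := H4 _ z.
by move/eqP; rewrite subr_eq0 => /eqP.
Qed.

Lemma GQ_dom x : rdom S x -> GQ x (Q x).
Proof. by move=> hx; exists (fun _ => x); split => //; [exact (conv_const HV x)|exact (conv_const HW (Q x))]. Qed.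

Lemma GQ_comb a x y w z : GQ x w -> GQ y z -> GQ (a *: x + y) (a *: w + z).
Proof.
move=> [u [du cu qu]] [v [dv cv qv]].
exists (fun n => a *: u n + v n); split.
- by move=> n; apply: rdom_comb.
- exact (conv_comb HV a cu cv).
- have -> : (fun n => Q (a *: u n + v n)) = (fun n => a *: Q (u n) + Q (v n)).
    by apply: funext => n; rewrite Q_comb.
  exact (conv_comb HW a qu qv).
Qed.

Lemma GQ_closed (x : nat -> V) (w : nat -> W) x0 w0 :
  (forall k, GQ (x k) (w k)) -> convV x x0 -> convW w w0 -> GQ x0 w0.
Proof.
move=> hk cx cw.
have [U hU] := choice hk.
have hN : forall k, exists n, NV (U k n - x k) < (k.+1%:R)^-1 /\
                           NW (Q (U k n) - w k) < (k.+1%:R)^-1.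
  move=> k; have [_ c1 c2] := hU k.
  have kp : 0 < (k.+1%:R : R)^-1 by rewrite invr_gt0 ltr0Sn.
  have [M hM] := ev_and (c1 _ kp) (c2 _ kp).
  by exists M; apply: hM.
have [Nf hNf] := choice hN.
exists (fun k => U k (Nf k)); split.
- by move=> k; have [h _ _] := hU k.
- move=> e e0; apply: ev_mono (ev_and (inv_small (q4 e0)) (cx _ (q4 e0))).
  move=> k [k1 k2]; have [k3 _] := hNf k.
  have k4 := lt_trans k3 k1; have := NN_split HV (U k (Nf k)) x0 (x k); lra.
- move=> e e0; apply: ev_mono (ev_and (inv_small (q4 e0)) (cw _ (q4 e0))).
  move=> k [k1 k2]; have [_ k3] := hNf k.
  have k4 := lt_trans k3 k1; have := NN_split HW (Q (U k (Nf k))) w0 (w k); lra.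
Qed.

Definition Dp x := exists w, GQ x w.
Definition Qb x : W :=
  match pselect (Dp x) with left p => projT1 (cid p) | right _ => 0 end.

Lemma Qb_spec x w : GQ x w -> Qb x = w.
Proof.
move=> hw; rewrite /Qb; case: pselect => [p|np].
  by case: (cid p) => w' hw' /=; apply: GQ_unique hw' hw.
by exfalso; apply: np; exists w.
Qed.
Lemma Qb_GQ x : Dp x -> GQ x (Qb x).
Proof. by case=> w hw; rewrite (Qb_spec hw). Qed.
Lemma Qb_comb a x y : Dp x -> Dp y -> Qb (a *: x + y) = a *: Qb x + Qb y.
Proof. by move=> /Qb_GQ hx /Qb_GQ hy; apply: Qb_spec; apply: GQ_comb. Qed.
Lemma Dp_comb a x y : Dp x -> Dp y -> Dp (a *: x + y).
Proof. by move=> /Qb_GQ hx /Qb_GQ hy; eexists; apply: GQ_comb hx hy. Qed.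
Lemma Dp_sub x y : Dp x -> Dp y -> Dp (x - y).
Proof.
by move=> hx hy; have := Dp_comb (-1) hy hx; rewrite scaleN1r addrC.
Qed.
Lemma Qb_sub x y : Dp x -> Dp y -> Qb (x - y) = Qb x - Qb y.
Proof.
by move=> hx hy; have := Qb_comb (-1) hy hx; rewrite !scaleN1r addrC (addrC (- _)).
Qed.

Definition tp x y : C := c%:C * ip x y + ipW (Qb x) (Qb y).

Lemma tp_diag x : tp x x = (c * NV x + NW (Qb x))%:C.
Proof. by rewrite /tp (ipxx HV) (ipxx HW) -!rmorphM -rmorphD. Qed.

Lemma abs_bound (a b k : R) : 0 <= a -> 0 <= b -> `|k * a + b| <= `|k| * a + b.
Proof.
move=> a0 b0; apply: le_trans (ler_normD _ _) _.
by rewrite normrM (ger0_norm a0) (ger0_norm b0).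
Qed.

Lemma small_comb (a b e : R) : 0 <= a -> 0 <= b -> 0 < e ->
  a * (`|c| + 1) < e / 2 -> b < e / 2 -> `|c * a + b| < e.
Proof.
move=> a0 b0 e0 h1 h2; apply: le_lt_trans (abs_bound c a0 b0) _.
have := normr_ge0 c; nra.
Qed.

Lemma eps_c (e : R) : 0 < e -> 0 < e / 2 / (`|c| + 1).
Proof. move=> e0; have := normr_ge0 c; move=> h; rewrite divr_gt0 //; lra. Qed.

Lemma eps_c_le (a e : R) : a < e / 2 / (`|c| + 1) -> a * (`|c| + 1) < e / 2.
Proof. by move=> h; have := normr_ge0 c => h0; rewrite -ltr_pdivlMr //; lra. Qed.

Lemma hnorm2 x : hnorm ip x ^+ 2 = NV x.
Proof. by rewrite /hnorm sqr_sqrtr //; exact: (NN_ge0 HV x). Qed.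

Lemma tp_sesq : sesq_form Dp tp.
Proof.
split.
- split; first by exists (Q 0); apply: GQ_dom rdom0.
  by move=> a x y; apply: Dp_comb.
- move=> a x y z hx hy hz.
  rewrite /tp (Qb_comb a hx hy) (ipDl HV) (ipZl HV) (ipDl HW) (ipZl HW); ring.
- move=> a x y z hx hy hz.
  rewrite /tp (Qb_comb a hx hy) (ipDr HV) (ipZr HV) (ipDr HW) (ipZr HW); ring.
Qed.

Lemma tp_semib : semibounded_form ip Dp tp.
Proof.
exists c => x hx; rewrite tp_diag hnorm2 lecR.
have := NN_ge0 HW (Qb x); lra.
Qed.

Lemma tp_closed : closed_form ip Dp tp.
Proof.
move=> u x du /hconvP cu fc.
have cq : cauchy ipW (fun n => Qb (u n)).
  move=> e e0; have [M1 h1] := fc _ (q4 e0).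
  have [M2 h2] := conv_cauchy HV cu (eps_c (q4 e0)).
  exists (maxn M1 M2) => n m hn hm.
  have hn1 : (M1 <= n)%N by apply: leq_trans hn; apply: leq_maxl.
  have hm1 : (M1 <= m)%N by apply: leq_trans hm; apply: leq_maxl.
  have hn2 : (M2 <= n)%N by apply: leq_trans hn; apply: leq_maxr.
  have hm2 : (M2 <= m)%N by apply: leq_trans hm; apply: leq_maxr.
  have k1 := h1 n m hn1 hm1; have k2 := eps_c_le (h2 n m hn2 hm2).
  rewrite tp_diag cmodR (Qb_sub (du n) (du m)) in k1.
  have a0 := NN_ge0 HV (u n - u m); have b0 := NN_ge0 HW (Qb (u n) - Qb (u m)).
  have ca := normr_ge0 c.
  have : `|c * NV (u n - u m)| <= `|c| * NV (u n - u m) by rewrite normrM (ger0_norm a0).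
  have := ler_normB (c * NV (u n - u m) + NW (Qb (u n) - Qb (u m))) (c * NV (u n - u m)).
  rewrite addrC addKr (ger0_norm b0); rewrite mulrDr mulr1 mulrC in k2; lra.
have [w cw] := complete HW cq.
have gx : GQ x w by apply: (GQ_closed (fun k => Qb_GQ (du k)) cu cw).
have dx : Dp x by exists w.
split=> //; apply/cvg0P => e e0.
apply: ev_mono (ev_and (cu _ (eps_c e0)) (cw _ (q2 e0))) => n [k1 k2].
rewrite tp_diag cmodR normr_id (Qb_sub (du n) dx) (Qb_spec gx).
exact (small_comb (NN_ge0 HV _) (NN_ge0 HW _) e0 (eps_c_le k1) k2).
Qed.

Lemma tp_ext : extends_tS ip S Dp tp.
Proof.
split; first by move=> x hx; exists (Q x); apply: GQ_dom.
move=> f f' g Sf hg; have hf : rdom S f by exists f'.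
by rewrite /tp (Qb_spec (GQ_dom hf)) (Qb_spec (GQ_dom hg)) (rep Sf hg).
Qed.

Lemma form_cauchy_of (u u' : nat -> V) phi w : (forall n, S (u n) (u' n)) ->
  convV u phi -> convW (fun n => Q (u n)) w ->
  forall e : R, 0 < e -> exists N : nat, forall n m : nat,
    (N <= n)%N -> (N <= m)%N -> cmod (ip (u' n - u' m) (u n - u m)) < e.
Proof.
move=> hS cu qu e e0.
have [M1 h1] := conv_cauchy HW qu (q2 e0).
have [M2 h2] := conv_cauchy HV cu (eps_c e0).
exists (maxn M1 M2) => n m hn hm.
have hn1 : (M1 <= n)%N by apply: leq_trans hn; apply: leq_maxl.
have hm1 : (M1 <= m)%N by apply: leq_trans hm; apply: leq_maxl.
have hn2 : (M2 <= n)%N by apply: leq_trans hn; apply: leq_maxr.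
have hm2 : (M2 <= m)%N by apply: leq_trans hm; apply: leq_maxr.
have dn : rdom S (u n) by exists (u' n).
have dm : rdom S (u m) by exists (u' m).
rewrite (rep_diag (S_sub (hS n) (hS m))) cmodR (Q_sub dn dm).
exact (small_comb (NN_ge0 HV _) (NN_ge0 HW _) e0 (eps_c_le (h2 n m hn2 hm2)) (h1 n m hn1 hm1)).
Qed.

Lemma ipSc f f' : S f f' -> ip (f' - c%:C *: f) f = (NW (Q f))%:C.
Proof.
move=> h; rewrite (ipBl HV) (ipZl HV) (rep_diag h) (ipxx HV) -rmorphM -rmorphB.
by congr (_%:C); ring.
Qed.

Section Closure.
Variables (Db : V -> Prop) (tb : V -> V -> C).
Hypothesis HC : is_closure_tS ip S Db tb.

Lemma minimal : form_ext Db tb Dp tp.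
Proof. by case: HC => _ _ _ _; apply; [exact: tp_sesq|exact: tp_semib|exact: tp_closed|exact: tp_ext]. Qed.

Lemma part1_back (u u' : nat -> V) phi : (forall n, S (u n) (u' n)) ->
  hconverges ip u phi ->
  (forall e : R, 0 < e -> exists N : nat, forall n m : nat,
          (N <= n)%N -> (N <= m)%N -> cmod (ip (u' n - u' m) (u n - u m)) < e) ->
  Db phi.
Proof.
move=> hS hc fc; case: HC => _ _ Hcl [Hd Ht] _.
have hD n : Db (u n) by apply: Hd; exists (u' n).
have [] // := Hcl u phi hD hc.
move=> e e0; have [N hN] := fc e e0; exists N => n m hn hm.
rewrite (Ht _ _ _ (S_sub (hS n) (hS m))); first exact: hN.
by apply: rdom_sub; [exists (u' n) | exists (u' m)].
Qed.

Lemma part1 phi : Db phi <->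
      exists (u u' : nat -> V), [/\ (forall n, S (u n) (u' n)),
        hconverges ip u phi &
        forall e : R, 0 < e -> exists N : nat, forall n m : nat,
          (N <= n)%N -> (N <= m)%N ->
          cmod (ip (u' n - u' m) (u n - u m)) < e].
Proof.
split; last by move=> [u [u' [hS hc fc]]]; apply: part1_back hS hc fc.
move=> hphi; have [sub _] := minimal.
have [u [du cu qu]] := Qb_GQ (sub _ hphi).
have [u' hu'] := choice du.
exists u, u'; split => //; first by apply/hconvP.
exact: form_cauchy_of hu' cu qu.
Qed.

Lemma NN0 (T : lmodType C) (ipT : T -> T -> C) : is_hilbert ipT -> NN ipT 0 = 0.
Proof. by move=> h; rewrite /NN (ip0l h). Qed.

Lemma part2 phi : (Db phi /\ tb phi phi = (c * hnorm ip phi ^+ 2)%:C) <->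
      exists (u u' : nat -> V), [/\ (forall n, S (u n) (u' n)),
        hconverges ip u phi &
        (fun n => cmod (ip (u' n - c%:C *: u n) (u n))) @ \oo --> (0 : R)].
Proof.
have [sub eqt] := minimal.
split.
  move=> [hphi heq]; have hD := sub _ hphi.
  rewrite (eqt _ _ hphi hphi) tp_diag hnorm2 in heq.
  have h0 : NW (Qb phi) = 0.
    by have := complexI heq; lra.
  have hq := NN_eq0 HW h0.
  have [u [du cu qu]] := Qb_GQ hD; rewrite hq in qu.
  have [u' hu'] := choice du.
  exists u, u'; split => //; first by apply/hconvP.
  apply/cvg0P => e e0; apply: ev_mono (qu e e0) => n.
  by rewrite (ipSc (hu' n)) cmodR normr_id subr0 ger0_norm //; exact: NN_ge0 HW _.
move=> [u [u' [hS hc hcv]]].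
have qu : convW (fun n => Q (u n)) 0.
  move=> e e0; have [M hM] := proj1 (cvg0P _) hcv e e0; exists M => n /hM.
  by rewrite (ipSc (hS n)) cmodR normr_id subr0 ger0_norm //; exact: NN_ge0 HW _.
have cu := proj1 (hconvP _ _ _) hc.
have hphi : Db phi by apply: part1_back hS hc (form_cauchy_of hS cu qu).
split => //.
have du n : rdom S (u n) by exists (u' n).
have gq : GQ phi 0 by exists u.
by rewrite (eqt _ _ hphi hphi) tp_diag hnorm2 (Qb_spec gq) (NN0 HW) addr0.
Qed.
End Closure.

Lemma normsq (z : C) : `|z| ^+ 2 = (m2 z)%:C.
Proof. by rewrite -add_Re2_Im2. Qed.

Lemma part3_fwd phi : in_ran_adj ip ipW (rdom S) Q phi ->
      exists Cphi : R, forall psi psi' : V, S psi psi' ->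
        `|ip psi phi| ^+ 2 <= Cphi%:C * ip (psi' - c%:C *: psi) psi.
Proof.
move=> [h hh]; exists (NW h) => psi psi' Sp.
have dp : rdom S psi by exists psi'.
rewrite normsq (ipSc Sp) -rmorphM lecR (ipC HV) m2_conj (hh _ dp).
exact: CS HW h (Q psi).
Qed.

Lemma Q0 : Q 0 = 0.
Proof.
have := Q_comb 1 rdom0 rdom0; rewrite scale1r addr0 scale1r => /(congr1 (fun t => t - Q 0)).
by rewrite subrr addrK.
Qed.
Lemma Q_scale a x : rdom S x -> Q (a *: x) = a *: Q x.
Proof. by move=> hx; have := Q_comb a hx rdom0; rewrite !addr0 Q0 addr0. Qed.
Lemma rdom_scale a x : rdom S x -> rdom S (a *: x).
Proof. by move=> hx; have := rdom_comb a hx rdom0; rewrite addr0. Qed.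
Lemma Q_add x y : rdom S x -> rdom S y -> Q (x + y) = Q x + Q y.
Proof. by move=> hx hy; have := Q_comb 1 hx hy; rewrite !scale1r. Qed.
Lemma rdom_add x y : rdom S x -> rdom S y -> rdom S (x + y).
Proof. by move=> hx hy; have := rdom_comb 1 hx hy; rewrite scale1r. Qed.

Lemma quad0 (q b : R) : 0 <= q -> (forall s : R, 0 <= s ^+ 2 * q + 2 * s * b) -> b = 0.
Proof.
move=> q0 h; have := h (- b / (q + 1)).
have -> : (- b / (q + 1)) ^+ 2 * q + 2 * (- b / (q + 1)) * b =
          - (b ^+ 2 * (q + 2)) / (q + 1) ^+ 2.
  by field; lra.
move=> hh; have : 0 <= - (b ^+ 2 * (q + 2)) / (q + 1) ^+ 2 * (q + 1) ^+ 2.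
  by apply: mulr_ge0 => //; apply: sqr_ge0.
rewrite divfK; last by rewrite sqrf_eq0; lra.
have := sqr_ge0 b; nra.
Qed.

Lemma lim_ge0 (r k : nat -> R) (l : R) :
  (forall e, 0 < e -> ev (fun n => (r n - l) ^+ 2 < e)) ->
  (forall e, 0 < e -> ev (fun n => k n < e)) ->
  (forall n, - k n < r n) -> 0 <= l.
Proof.
move=> hc hk hb; rewrite leNgt; apply/negP => l0.
have e1 : 0 < l ^+ 2 / 4 by rewrite divr_gt0 //; nra.
have e2 : 0 < - l / 2 by lra.
have [M hM] := ev_and (hc _ e1) (hk _ e2).
have [k1 k2] := hM M (leqnn _); have := hb M.
set x := r M in k1 *; set y := k M in k2 *.
move=> k3; nra.
Qed.

Section Part3.
Variables (phi : V) (Cphi : R).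
Hypothesis hC : forall psi psi' : V, S psi psi' ->
        `|ip psi phi| ^+ 2 <= Cphi%:C * ip (psi' - c%:C *: psi) psi.

Definition J f := NW (Q f) - 2 * complex.Re (ip f phi).

Lemma J_bound f : rdom S f -> - `|Cphi| <= J f.
Proof.
move=> [f' Sf]; have := hC Sf; rewrite normsq (ipSc Sf) -rmorphM lecR /J.
have q0 := NN_ge0 HW (Q f).
have : complex.Re (ip f phi) ^+ 2 <= m2 (ip f phi).
  by rewrite /m2 lerDl sqr_ge0.
set x := complex.Re (ip f phi); set q := NW (Q f); set m := m2 (ip f phi).
move=> h1 h2; have [C0|C0] := leP 0 Cphi.
  rewrite ger0_norm //.
  have h3 : 4 * x ^+ 2 <= (q + Cphi) ^+ 2 by have := sqr_ge0 (q - Cphi); nra.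
  have : 2 * x <= q + Cphi.
    rewrite leNgt; apply/negP => h4; have : (q + Cphi) ^+ 2 < (2 * x) ^+ 2.
      by rewrite ltr_pXn2r //; nra.
    nra.
  lra.
rewrite ltr0_norm //; have : x ^+ 2 <= 0 by nra.
have := sqr_ge0 x => h4 h5; have : x = 0 by nra.
move=> ->; lra.
Qed.

Lemma ReM_real (s : R) (z : C) : complex.Re (s%:C * z) = s * complex.Re z.
Proof. by case: z => a b /=; ring. Qed.

Lemma J_exp t g f : rdom S g -> rdom S f ->
  J (t *: g + f) = J f + m2 t * NW (Q g)
                   + 2 * complex.Re (t * (ipW (Q g) (Q f) - ip g phi)).
Proof.
move=> hg hf; rewrite /J (Q_comb t hg hf) (NND HW) (NNZ HW) (ipZl HW) (ipDl HV) (ipZl HV).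
move: (ipW (Q g) (Q f)) (ip g phi) (ip f phi) t => a b z t.
by case: a => ? ?; case: b => ? ?; case: z => ? ?; case: t => ? ? /=; ring.
Qed.

Lemma J_mid f g : rdom S f -> rdom S g ->
  J ((2^-1 : R)%:C *: (f + g)) = (NW (Q f + Q g)) / 4
     - complex.Re (ip f phi) - complex.Re (ip g phi).
Proof.
move=> hf hg; have hfg := rdom_add hf hg.
rewrite /J (Q_scale _ hfg) (NNZ HW) (ipZl HV) ReM_real (ipDl HV) ReD.
by rewrite (Q_add hf hg) /m2 /=; field.
Qed.

Lemma part3_back : in_ran_adj ip ipW (rdom S) Q phi.
Proof.
pose E := [set r | exists f, rdom S f /\ r = J f].
have hE : has_inf E.
  split; first by exists (J 0), 0; split => //; exact: rdom0.
  by exists (- `|Cphi|) => r [f [hf ->]]; apply: J_bound.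
set d := inf E.
have dle f : rdom S f -> d <= J f.
  by move=> hf; apply: (ge_inf hE.2); exists f.
have hF k : exists f, rdom S f /\ J f < d + ik R k.
  have kp := ik_gt0 R k.
  have [r [f [hf ->]] hr] := inf_adherent kp hE.
  by exists f.
have [F hFk] := choice hF.
have dF k : rdom S (F k) by case: (hFk k).
have JF k : J (F k) < d + ik R k by case: (hFk k).
have key n m : NW (Q (F n) - Q (F m)) <= 2 * J (F n) + 2 * J (F m) - 4 * d.
  have := dle _ (rdom_scale (2^-1 : R)%:C (rdom_add (dF n) (dF m))).
  rewrite (J_mid (dF n) (dF m)) /J.
  have := NND HW (Q (F n)) (Q (F m)); have := NNB HW (Q (F n)) (Q (F m)).
  lra.
have cq : cauchy ipW (fun n => Q (F n)).
  move=> e e0; have [M hM] := inv_small (q4 e0).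
  exists M => n m hn hm; have := key n m.
  have j1 : J (F n) < d + e / 4 by apply: (lt_trans (JF n)); rewrite ltrD2l; exact: hM n hn.
  have j2 : J (F m) < d + e / 4 by apply: (lt_trans (JF m)); rewrite ltrD2l; exact: hM m hm.
  lra.
have [h ch] := complete HW cq.
exists h => g hg.
(* variational inequality *)
have var t : 0 <= m2 t * NW (Q g) + 2 * complex.Re (t * (ipW (Q g) h - ip g phi)).
  apply: (@lim_ge0 (fun n => m2 t * NW (Q g) +
          2 * complex.Re (t * (ipW (Q g) (Q (F n)) - ip g phi))) (ik R)).
  - 
move=> e e0; have mt : 0 <= m2 t by exact: m2_ge0.
    have e' : 0 < e / 4 / (m2 t + 1) by rewrite divr_gt0 //; lra.
    apply: ev_mono (cconv_ipr HW (Q g) ch e'); move=> n hn.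
    have -> : m2 t * NW (Q g) + 2 * complex.Re (t * (ipW (Q g) (Q (F n)) - ip g phi)) -
       (m2 t * NW (Q g) + 2 * complex.Re (t * (ipW (Q g) h - ip g phi))) =
       2 * complex.Re (t * (ipW (Q g) (Q (F n)) - ipW (Q g) h)).
      clear; move: (ipW (Q g) (Q (F n))) (ipW (Q g) h) (ip g phi) t => a b z t.
      by case: a => ? ?; case: b => ? ?; case: z => ? ?; case: t => ? ? /=; ring.
    move: hn; move: (ipW (Q g) (Q (F n)) - ipW (Q g) h) => z hn.
    have h1 : complex.Re (t * z) ^+ 2 <= m2 t * m2 z.
      by rewrite -m2_mul /m2 lerDl sqr_ge0.
    have h2 : m2 z * (m2 t + 1) < e / 4 by rewrite -ltr_pdivlMr //; lra.
    have z0 := m2_ge0 z.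
    have h3 : complex.Re (t * z) ^+ 2 <= m2 z * (m2 t + 1).
      apply: (le_trans h1); nra.
    have h4 := le_lt_trans h3 h2.
    rewrite exprMn; have : 2 ^+ 2 = 4 :> R by rewrite expr2; lra.
    move=> ->; lra.
  - by move=> e e0; exact: inv_small e0.
  move=> n; have := dle _ (rdom_comb t hg (dF n)).
  rewrite (J_exp t hg (dF n)); have := JF n; lra.
have [a ha] : exists a, ipW (Q g) h - ip g phi = a by eexists.
rewrite ha in var.
have q0 := NN_ge0 HW (Q g).
case: a ha var => a1 a2 ha var.
have ra : a1 = 0.
  apply: (quad0 q0) => s; have := var s%:C; rewrite /m2 /=; nra.
have ia : a2 = 0.
  apply: (quad0 q0) => s; have := var ((- s) *i); rewrite /m2 /=; nra.
have a0 : ipW (Q g) h - ip g phi = 0 by rewrite ha ra ia.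
have : ipW (Q g) h = ip g phi by apply/eqP; rewrite -subr_eq0; apply/eqP.
by move=> e; rewrite (ipC HV) (ipC HW h) e.
Qed.
End Part3.
End Main.

Unset Implicit Arguments.
Set Strict Implicit.

Theorem theorem2p5 (R : realType) (V : lmodType R[i]) (ip : V -> V -> R[i])
    (S : V -> V -> Prop) (gamma c : R)
    (Db : V -> Prop) (tb : V -> V -> R[i])
    (W : lmodType R[i]) (ipW : W -> W -> R[i]) (Q : V -> W) :
  is_hilbert ip -> linrel S -> semibounded_lb ip S gamma -> c <= gamma ->
  is_closure_tS ip S Db tb ->
  is_hilbert ipW -> representing_map ip ipW S c Q ->
  [/\
   (* (1) *)
   (forall phi : V, Db phi <->
      exists (u u' : nat -> V), [/\ (forall n, S (u n) (u' n)),
        hconverges ip u phi &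
        forall e : R, 0 < e -> exists N : nat, forall n m : nat,
          (N <= n)%N -> (N <= m)%N ->
          cmod (ip (u' n - u' m) (u n - u m)) < e]),
   (* (2) *)
   (forall phi : V, (Db phi /\ tb phi phi = (c * hnorm ip phi ^+ 2)%:C) <->
      exists (u u' : nat -> V), [/\ (forall n, S (u n) (u' n)),
        hconverges ip u phi &
        (fun n => cmod (ip (u' n - c%:C *: u n) (u n))) @ \oo --> (0 : R)]) &
   (* (3) *)
   (forall phi : V, in_ran_adj ip ipW (rdom S) Q phi <->
      exists Cphi : R, forall psi psi' : V, S psi psi' ->
        `|ip psi phi| ^+ 2 <= Cphi%:C * ip (psi' - c%:C *: psi) psi)].
Proof.
move=> HV LS _ _ HC HW RM; split.
- exact: (part1 HV HW LS RM HC).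
- exact: (part2 HV HW LS RM HC).
- move=> phi; split; first exact: (part3_fwd HV HW RM).
  by move=> [Cphi hC]; exact: (part3_back HV HW LS RM hC).
Qed.
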